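(* Let $\Omega\subset\mathbb{R}^d$ be open, $E$ a non-trivial locally convex Hausdorff space over $\mathbb{K}$ and $\mathcal{FV}(\Omega)$ a dom-space such that $\mathcal{FV}(\Omega)\subset\mathcal{C}^1(\Omega)$ as a linear subspace. If $\delta\in\mathcal{C}^1(\Omega,\mathcal{FV}(\Omega)'_\kappa)$, where $\delta(x):=\delta_x$, then for all $u\in\mathcal{FV}(\Omega)\varepsilon E$ we have $S(u)\in\mathcal{C}^1(\Omega,E)$ and $(\partial^{e_n})^E S(u)(x)=u(\delta_x\circ(\partial^{e_n})^{\mathbb{K}})$ for all $x\in\Omega$ and $1\le n\le d$.
   Context: $\mathbb{K}\in\{\mathbb{R},\mathbb{C}\}$. For a locally convex space $Z$ and $f\colon\Omega\to Z$, $(\partial^{e_n})^Z f(x):=\lim_{h\to0,\,h\in\mathbb{R}\setminus\{0\}}\frac{f(x+he_n)-f(x)}{h}$ ($e_n$ the $n$-th unit vector); $f\in\mathcal{C}^1(\Omega,Z)$ if these limits exist for all $x$, $n$ and each $(\partial^{e_n})^Z f$ is continuous; $\mathcal{C}^1(\Omega):=\mathcal{C}^1(\Omega,\mathbb{K})$. Framework: $J,M$ non-empty index sets, $(\omega_m)_{m\in M}$ non-empty sets, $\nu_{j,m}\colon\omega_m\to[0,\infty)$ such that for all $m$, $x\in\omega_m$ some $\nu_{j,m}(x)>0$; $\operatorname{AP}(\Omega)\subset\mathbb{K}^\Omega$ a linear subspace; $T_m\colon\operatorname{dom}T_m\to\mathbb{K}^{\omega_m}$ linear maps on linear subspaces of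 $\mathbb{K}^\Omega$; $\mathcal{FV}(\Omega):=\{f\in\operatorname{AP}(\Omega)\cap\bigcap_m\operatorname{dom}T_m: |f|_{j,m}:=\sup_{x\in\omega_m}|T_m(f)(x)|\nu_{j,m}(x)<\infty\ \forall j,m\}$ with these seminorms. It is a dom-space if it is Hausdorff, the seminorms are directed and every $\delta_x\colon f\mapsto f(x)$ belongs to $\mathcal{FV}(\Omega)'$. $\mathcal{FV}(\Omega)'_\kappa$: dual with the topology of uniform convergence on absolutely convex compact subsets of $\mathcal{FV}(\Omega)$. $\mathcal{FV}(\Omega)\varepsilon E$: continuous linear maps $\mathcal{FV}(\Omega)'_\kappa\to E$ with the topology of uniform convergence on equicontinuous sets; $S(u)(x):=u(\delta_x)$. $\delta_x\circ(\partial^{e_n})^{\mathbb{K}}$ is the functional $f\mapsto(\partial^{e_n})^{\mathbb{K}}f(x)$ on $\mathcal{FV}(\Omega)$. *)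

(* Defs.v *)
From mathcomp Require Import all_boot all_order all_algebra.
From mathcomp Require Import all_classical all_reals all_analysis.
From mathcomp Require Import complex.
From Stdlib Require List.
Import Order.TTheory GRing.Theory Num.Theory numFieldNormedType.Exports.

Set Implicit Arguments.
Unset Strict Implicit.
Unset Printing Implicit Defensive.

Local Open Scope ring_scope.
Local Open Scope classical_set_scope.

Definition Kfld (R : realType) (b : bool) : numFieldType :=
  if b then (R : numFieldType) else (R[i] : numFieldType).

Definition Kemb (R : realType) (b : bool) : R -> Kfld R b :=
  if b as b' return R -> Kfld R b' then (fun r => r) else (fun r => (r%:C)%C).

Arguments Kfld : clear implicits.
Arguments Kemb : clear implicits.

Section Defs.
Variables (R : realType) (K : numFieldType) (iota : R -> K).
Variables (d : nat) (Om : set 'rV[R]_d).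

(* points of Omega; K^Omega is (pts -> K) *)
Definition pts := {x : 'rV[R]_d | x \in Om}.

Definition ev (n : 'I_d) : 'rV[R]_d := delta_mx 0 n.

(* extension by 0 outside Omega (only used near points of the open set Omega) *)
Definition extf (Z : zmodType) (g : pts -> Z) (y : 'rV[R]_d) : Z :=
  if insub y is Some z then g z else 0.

Definition dquot (Z : lmodType K) (g : pts -> Z) (x : pts) (n : 'I_d) (h : R) : Z :=
  (iota h)^-1 *: (extf g (val x + h *: ev n) - g x).

Definition partial_lim (Z : tvsType K) (g : pts -> Z) (x : pts) (n : 'I_d) (l : Z) :=
  dquot g x n h @[h --> (0 : R)^'] --> l.

Definition C1 (Z : tvsType K) (g : pts -> Z) :=
  exists dg : 'I_d -> pts -> Z,
    (forall n x, partial_lim g x n (dg n x)) /\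
    (forall n, {within Om, continuous (extf (dg n))}).

Definition pdK (f : pts -> K) (n : 'I_d) (x : pts) : K :=
  lim (@dquot K^o f x n h @[h --> (0 : R)^']).

Record framework := Framework {
  fJ : Type;
  fM : Type;
  fom : fM -> Type;
  fnu : fJ -> forall m : fM, fom m -> R;
  fAP : set (pts -> K);
  fdomT : fM -> set (pts -> K);
  fT : forall m : fM, (pts -> K) -> fom m -> K }.

Arguments fom {f} m.
Arguments fnu {f} j m x.
Arguments fT {f} m.
Arguments fAP : clear implicits.
Arguments fdomT : clear implicits.

Definition lin_comb (X : Type) (a : K) (f g : X -> K) : X -> K :=
  fun z => a * f z + g z.

Definition is_subspace (X : Type) (A : set (X -> K)) :=
  A (fun _ => 0) /\ forall a f g, A f -> A g -> A (lin_comb a f g).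

Variable W : framework.

Definition framework_ok :=
  [/\ inhabited (fJ W), inhabited (fM W),
      (forall m : fM W, inhabited (fom m)),
      (forall (j : fJ W) (m : fM W) x, 0 <= fnu j m x) &
      (forall (m : fM W) x, exists j, 0 < fnu j m x)] /\
  [/\ is_subspace (fAP W),
      (forall m, is_subspace (fdomT W m)) &
      (forall m a f g, fdomT W m f -> fdomT W m g ->
         fT m (lin_comb a f g) = lin_comb a (fT m f) (fT m g))].

(* |f|_{j,m} <= s, i.e. s bounds { |T_m(f)(x)| nu_{j,m}(x) : x in omega_m } *)
Definition sn_le (j : fJ W) (m : fM W) (f : pts -> K) (s : R) :=
  forall x : fom m, `|fT m f x| * iota (fnu j m x) <= iota s.

(* |f|_{j,m} < e  (sup < e iff some upper bound s < e) *)
Definition sn_lt (j : fJ W) (m : fM W) (f : pts -> K) (e : R) :=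
  exists s, s < e /\ sn_le j m f s.

Definition FV (f : pts -> K) :=
  [/\ fAP W f, (forall m, fdomT W m f) & (forall (j : fJ W) (m : fM W), exists s, sn_le j m f s)].

Definition dif (X : Type) (f g : X -> K) : X -> K := fun z => f z - g z.

(* neighbourhood base of f in FV(Omega) for the topology induced by the
   seminorms: finite intersections of seminorm balls *)
Definition FV_nbhs (f : pts -> K) : set_system (pts -> K) :=
  [set A | exists (I : seq (fJ W * fM W)) (e : R), 0 < e /\
     (FV `&` [set g | forall i, List.In i I -> sn_lt i.1 i.2 (dif g f) e]) `<=` A].

Definition FV_hausdorff :=
  forall f g, FV f -> FV g ->
    (forall A B, FV_nbhs f A -> FV_nbhs g B -> A `&` B !=set0) -> f = g.

Definition FV_directed :=
  forall (j1 : fJ W) (m1 : fM W) (j2 : fJ W) (m2 : fM W),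
    exists (j3 : fJ W) (m3 : fM W) (C : R), 0 < C /\
    forall f, FV f -> forall s, sn_le j3 m3 f s ->
      sn_le j1 m1 f (C * s) /\ sn_le j2 m2 f (C * s).

(* phi belongs to the dual FV(Omega)' (only its values on FV matter) *)
Definition FV_dual (phi : (pts -> K) -> K) :=
  (forall a f g, FV f -> FV g -> phi (lin_comb a f g) = a * phi f + phi g) /\
  (forall f, FV f -> forall e : R, 0 < e ->
     FV_nbhs f [set g | `|phi g - phi f| < iota e]).

Definition delta (x : pts) : (pts -> K) -> K := fun f => f x.

Definition dom_space :=
  [/\ FV_hausdorff, FV_directed & forall x, FV_dual (delta x)].

Definition abs_convex (A : set (pts -> K)) :=
  forall f g (a b : K), A f -> A g -> `|a| + `|b| <= 1 ->
    A (fun z => a * f z + b * g z).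

Definition FV_compact (A : set (pts -> K)) :=
  A `<=` FV /\
  forall F : set_system (pts -> K), ProperFilter F -> F A ->
    exists f, A f /\ forall B C, F B -> FV_nbhs f C -> B `&` C !=set0.

Definition kappa_nbhs (phi : (pts -> K) -> K) : set_system ((pts -> K) -> K) :=
  [set U | exists (A : set (pts -> K)) (e : R),
     [/\ abs_convex A, FV_compact A, 0 < e &
         [set psi | forall f, A f -> `|psi f - phi f| < iota e] `<=` U]].

Definition extD (g : pts -> (pts -> K) -> K) (y : 'rV[R]_d) : (pts -> K) -> K :=
  if insub y is Some z then g z else (fun _ => 0).

Definition dquot_dual (g : pts -> (pts -> K) -> K) (x : pts) (n : 'I_d) (h : R)
  : (pts -> K) -> K :=
  fun f => (iota h)^-1 * (extD g (val x + h *: ev n) f - g x f).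

Definition C1_dual (g : pts -> (pts -> K) -> K) :=
  (forall x, FV_dual (g x)) /\
  exists dg : 'I_d -> pts -> (pts -> K) -> K,
    [/\ (forall n x, FV_dual (dg n x)),
        (forall n x, dquot_dual g x n h @[h --> (0 : R)^'] `=>` kappa_nbhs (dg n x)) &
        (forall n x, extD (dg n) y @[y --> within Om (nbhs (val x))]
                        `=>` kappa_nbhs (dg n x))].

(* u in FV(Omega) eps E: continuous linear maps FV(Omega)'_kappa -> E *)
Definition eps_prod (E : tvsType K) (u : ((pts -> K) -> K) -> E) :=
  (forall a phi psi, FV_dual phi -> FV_dual psi ->
     u (fun f => a * phi f + psi f) = a *: u phi + u psi) /\
  (forall phi, FV_dual phi -> forall U, nbhs (u phi) U ->
     exists V, kappa_nbhs phi V /\ forall psi, FV_dual psi -> V psi -> U (u psi)).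

Definition Smap (E : tvsType K) (u : ((pts -> K) -> K) -> E) : pts -> E :=
  fun x => u (delta x).

End Defs.

(* Main.v *)
Require Import Defs.
From mathcomp Require Import all_boot all_order all_algebra.
From mathcomp Require Import all_classical all_reals all_analysis.
From mathcomp Require Import complex.
From Stdlib Require List.
Import Order.TTheory GRing.Theory Num.Theory numFieldNormedType.Exports.
Local Open Scope ring_scope.
Local Open Scope classical_set_scope.

Local Open Scope complex_scope.
Section CC.
Variable R : realType.
Lemma diskR (G : set_system R) : ProperFilter G -> G [set x | `|x| <= 1] ->
  exists a, `|a| <= 1 /\ forall S, G S -> forall e, 0 < e -> exists x, S x /\ `|x - a| < e.
Proof.
move=> PG G1.
have G2 : G `[-1, 1] by apply: filterS G1 => x /=; rewrite in_itv /= -ler_norml.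
have [a [Ha Hcl]] := segment_compact PG G2.
exists a; split; first by move: Ha; rewrite /= in_itv /= -ler_norml.
move=> S GS e e0.
have [x [Sx Bx]] := Hcl S _ GS (nbhsx_ballx a _ e0).
by exists x; split => //; move: Bx; rewrite -ball_normE /ball_ /= distrC.
Qed.
Lemma iota_normC (r : R) : `|r%:C| = `|r|%:C.
Proof. rewrite normc_def /= expr0n /= addr0 sqrtr_sqr //. Qed.
Lemma norm_realC (a : R[i]) : exists r : R, `|a| = r%:C.
Proof. rewrite normc_def; eexists; reflexivity. Qed.
Lemma normReC (z : R[i]) : `|complex.Re z|%:C <= `|z|.
Proof. rewrite normc_def lecR -sqrtr_sqr ler_sqrt ?lerDl ?addr_ge0 ?sqr_ge0 //. Qed.
Lemma normImC (z : R[i]) : `|complex.Im z|%:C <= `|z|.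
Proof. rewrite normc_def lecR -sqrtr_sqr ler_sqrt ?lerDr ?addr_ge0 ?sqr_ge0 //. Qed.
Lemma normC_le (z : R[i]) : `|z| <= (`|complex.Re z| + `|complex.Im z|)%:C.
Proof.
rewrite normc_def lecR -(@ger0_norm _ (`|complex.Re z| + `|complex.Im z|)) ?addr_ge0 //.
rewrite -sqrtr_sqr ler_sqrt ?addr_ge0 ?sqr_ge0 //.
rewrite sqrrD -[complex.Re z ^+ 2]real_normK ?num_real // -[complex.Im z ^+ 2]real_normK ?num_real //.
by rewrite -addrA lerD2l lerDr mulrn_wge0 ?mulr_ge0.
Qed.
Lemma diskC (G : set_system R[i]) : ProperFilter G -> G [set x | `|x| <= 1] ->
  exists c, `|c| <= 1 /\ forall S, G S -> forall e : R, 0 < e ->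
     exists z, S z /\ `|z - c| < e%:C.
Proof.
move=> PG G1.
have [a [Ha H1]] : exists a, `|a| <= 1 /\ forall S, ((@complex.Re R) @ G) S ->
    forall e, 0 < e -> exists x, S x /\ `|x - a| < e.
  apply: diskR; change (G ((@complex.Re R) @^-1` [set x | `|x| <= 1])).
  apply: (filterS _ G1) => z /= z1.
  rewrite -lecR; apply: le_trans z1; exact: normReC.
have H1' : forall T, G T -> forall e, 0 < e ->
    exists z, T z /\ `|complex.Re z - a| < e.
  move=> T GT e e0.
  have [x [[z Tz <-] xe]] := H1 ((@complex.Re R) @` T) (filterS (fun z Tz => ex_intro2 _ _ z Tz erefl) GT) e e0.
  by exists z.
pose D := fun p : set R[i] * R => G p.1 /\ 0 < p.2.
pose B := fun p : set R[i] * R =>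
  (@complex.Im R) @` (p.1 `&` [set z | `|complex.Re z - a| < p.2]).
have FH : Filter (filter_from D B).
  apply: filter_from_filter; first by exists (setT, 1); split => //; exact: filterT.
  move=> [T1 e1] [T2 e2] [/= GT1 e10] [/= GT2 e20].
  exists (T1 `&` T2, Num.min e1 e2); first by split; [exact: filterI|rewrite lt_min e10].
  move=> y [z [[/= T1z T2z] ze] <-]; move: ze; rewrite /= lt_min => /andP[ze1 ze2].
  by split; exists z.
have PH : ProperFilter (filter_from D B).
  apply: filter_from_proper => -[T e] [/= GT e0].
  have [z [Tz ze]] := H1' T GT e e0.
  by exists (complex.Im z); exists z.
have HI : filter_from D B [set x | `|x| <= 1].
  exists ([set x | `|x| <= 1], 1); first by split => //=; exact: ltr01.
  move=> y [z [/= z1 _] <-]; rewrite -lecR; apply: le_trans z1; exact: normImC.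
have [bb [Hb H2]] := diskR _ PH HI.
have key : forall T, G T -> forall e : R, 0 < e ->
     exists z, T z /\ `|z - (a +i* bb)| < e%:C.
  move=> T GT e e0.
  have e20 : 0 < e / 2 by rewrite divr_gt0.
  have [y [[z [Tz ze] <-] ye]] := H2 (B (T, e / 2)) (ex_intro2 _ _ (T, e / 2) (conj GT e20) (fun _ h => h)) _ e20.
  exists z; split => //.
  apply: le_lt_trans (normC_le _) _; rewrite ltcR.
  case: z Tz ze ye => x y' /= _ ze ye.
  by rewrite [e]splitr ltrD.
exists (a +i* bb); split; last exact: key.
have [r hr] : exists r : R, `|a +i* bb| = r%:C by eexists; exact: normc_def.
rewrite hr -[1]/(1%:C) lecR; apply/ler_addgt0Pr => e e0.
have [z [z1 ze]] := key _ G1 e e0.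
rewrite -lecR -hr rmorphD /=.
have -> : a +i* bb = z + (a +i* bb - z) by rewrite addrC subrK.
apply: le_trans (ler_normD _ _) _.
by rewrite lerD // distrC ltW.
Qed.

End CC.
Local Close Scope complex_scope.

Section Iota.
Variables (R : realType) (b : bool).
Local Notation K := (Kfld R b).
Local Notation iota := (Kemb R b).

Lemma KiotaD r s : iota (r + s) = iota r + iota s.
Proof. by case: b => //=; rewrite rmorphD. Qed.
Lemma KiotaM r s : iota (r * s) = iota r * iota s.
Proof. by case: b => //=; rewrite rmorphM. Qed.
Lemma Kiota0 : iota 0 = 0.
Proof. by case: b. Qed.
Lemma Kiota_le r s : (iota r <= iota s) = (r <= s).
Proof. by case: b => //=; rewrite lecR. Qed.
Lemma Kiota_lt r s : (iota r < iota s) = (r < s).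
Proof. by case: b => //=; rewrite ltcR. Qed.
Lemma Knorm_iota (a : K) : exists r, `|a| = iota r.
Proof. by case: b a => /= a; [exists `|a| | exact: norm_realC]. Qed.
Lemma KdiskK (G : set_system K) : ProperFilter G -> G [set c | `|c| <= 1] ->
  exists c0, `|c0| <= 1 /\ forall S, G S -> forall e, 0 < e ->
    exists c, S c /\ `|c - c0| < iota e.
Proof. by case: b G => /= G; [exact: diskR | exact: diskC]. Qed.
End Iota.
Section Main.
Variables (R : realType) (K : numFieldType) (iota : R -> K).
Hypothesis iotaD : forall r s, iota (r + s) = iota r + iota s.
Hypothesis iotaM : forall r s, iota (r * s) = iota r * iota s.
Hypothesis iota_le : forall r s, (iota r <= iota s) = (r <= s).
Hypothesis iota_lt : forall r s, (iota r < iota s) = (r < s).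
Hypothesis iota0 : iota 0 = 0.
Hypothesis norm_iota : forall a : K, exists r, `|a| = iota r.
Hypothesis diskK : forall G : set_system K, ProperFilter G -> G [set c | `|c| <= 1] ->
  exists c0, `|c0| <= 1 /\ forall S, G S -> forall e, 0 < e ->
    exists c, S c /\ `|c - c0| < iota e.

Lemma norm_iota' (a : K) : exists r, 0 <= r /\ `|a| = iota r.
Proof.
have [r hr] := norm_iota a; exists r; split => //.
by rewrite -iota_le iota0 -hr.
Qed.

Lemma pos_iota (e : K) : 0 < e -> exists r, 0 < r /\ e = iota r.
Proof.
move=> e0; have [r hr] := norm_iota e; exists r.
by rewrite -iota_lt iota0 -hr gtr0_norm.
Qed.

Variables (d : nat) (Om : set 'rV[R]_d) (W : framework K Om).
Hypothesis Wok : framework_ok W.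

Local Notation FVf := (FV iota W).
Local Notation FVd := (FV_dual iota W).
Local Notation pts := (pts Om).

Lemma nu_ge0 j m (x : fom m) : 0 <= iota (@fnu _ _ _ _ W j m x).
Proof. by case: Wok => -[_ _ _ h _] _; rewrite -iota0 iota_le h. Qed.

Lemma AP0 : fAP W (fun _ => 0).
Proof. by case: Wok => _ [[h _] _ _]. Qed.

Lemma T0 m : @fT _ _ _ _ W m (fun _ => 0) = (fun _ => 0).
Proof.
case: Wok => _ [_ hd hT].
have := hT m 1 (fun _ => 0) (fun _ => 0) (proj1 (hd m)) (proj1 (hd m)).
have -> : lin_comb 1 (fun _ : pts => 0 : K) (fun _ => 0) = (fun _ => 0).
  by apply: funext => z; rewrite /lin_comb mulr0 addr0.
move=> h; apply: funext => x.
have := congr1 (fun f => f x) h; rewrite /lin_comb mul1r.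
by move/eqP; rewrite -subr_eq0 opprD addrA subrr add0r oppr_eq0 => /eqP.
Qed.

Lemma sn_le_mono (j : fJ W) (m : fM W) (f : pts -> K) (s s' : R) : s <= s' -> sn_le iota j m f s -> sn_le iota j m f s'.
Proof. by move=> ss h x; apply: le_trans (h x) _; rewrite iota_le. Qed.

Lemma sn_lt_mono (j : fJ W) (m : fM W) (f : pts -> K) (e e' : R) : e <= e' -> sn_lt iota j m f e -> sn_lt iota j m f e'.
Proof. by move=> ee [s [se h]]; exists s; split => //; apply: lt_le_trans ee. Qed.

Lemma sn_le_lin (j : fJ W) (m : fM W) (a : K) (f g : pts -> K) (r s1 s2 : R) : fdomT m f -> fdomT m g ->
  `|a| = iota r -> sn_le iota j m f s1 -> sn_le iota j m g s2 ->
  sn_le iota j m (lin_comb a f g) (r * s1 + s2).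
Proof.
case: Wok => _ [_ _ hT] df dg ha h1 h2 x.
rewrite hT // /lin_comb iotaD iotaM -ha.
apply: le_trans (_ : (`|a| * `|fT f x| + `|fT g x|) * iota (fnu j x) <= _).
  by apply: ler_wpM2r; [exact: nu_ge0| rewrite -normrM ler_normD].
rewrite mulrDl -mulrA; apply: lerD => //.
by apply: ler_wpM2l => //; exact: h1.
Qed.

Lemma FV_lin (a : K) (f g : pts -> K) : FVf f -> FVf g -> FVf (lin_comb a f g).
Proof.
case=> af df sf [ag dg sg]; have [r [r0 ha]] := norm_iota' a.
case: (Wok) => _ [[_ hAP] hd _]; split.
- exact: hAP.
- by move=> m; apply: (proj2 (hd m)).
- move=> j m; have [s1 h1] := sf j m; have [s2 h2] := sg j m.
  by exists (r * s1 + s2); apply: sn_le_lin.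
Qed.

Lemma FV0 : FVf (fun _ => 0).
Proof.
case: (Wok) => _ [[h _] hd _]; split => //.
- by move=> m; apply: (proj1 (hd m)).
- by move=> j m; exists 0; move=> x; rewrite T0 normr0 mul0r iota0.
Qed.

Lemma FV_scale (c : K) (f : pts -> K) : FVf f -> FVf (fun z => c * f z).
Proof.
move=> hf; have := @FV_lin c f _ hf FV0.
by have -> : lin_comb c f (fun _ => 0) = (fun z => c * f z) by apply: funext => z; rewrite /lin_comb addr0.
Qed.

Lemma sn_le_scale (j : fJ W) (m : fM W) (c : K) (f : pts -> K) (r s : R) : FVf f -> `|c| = iota r -> sn_le iota j m f s ->
  sn_le iota j m (fun z => c * f z) (r * s).
Proof.
move=> [_ df _] hc h.
have := @sn_le_lin j m c f (fun _ => 0) r s 0 (df m) _ hc h.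
have -> : lin_comb c f (fun _ => 0) = (fun z => c * f z) by apply: funext => z; rewrite /lin_comb addr0.
rewrite addr0; apply.
  by case: Wok => _ [_ hd _]; exact: (proj1 (hd m)).
by move=> x; rewrite T0 normr0 mul0r iota0.
Qed.

Lemma FVn_mono (f : pts -> K) (A B : set (pts -> K)) :
  (forall g, FVf g -> A g -> B g) -> FV_nbhs iota W f A -> FV_nbhs iota W f B.
Proof.
move=> AB [I [e [e0 h]]]; exists I, e; split => // g [Fg hg].
by apply: AB => //; apply: h.
Qed.

Lemma FVn_I (f : pts -> K) (A B : set (pts -> K)) :
  FV_nbhs iota W f A -> FV_nbhs iota W f B -> FV_nbhs iota W f (A `&` B).
Proof.
move=> [I1 [e1 [e10 h1]]] [I2 [e2 [e20 h2]]].
exists (I1 ++ I2)%list, (Num.min e1 e2); split; first by rewrite lt_min e10.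
move=> g [Fg hg]; split.
- apply: h1; split => // i iI; apply: sn_lt_mono (hg i _); first by rewrite ge_min lexx.
  by apply: List.in_or_app; left.
- apply: h2; split => // i iI; apply: sn_lt_mono (hg i _); first by rewrite ge_min lexx orbT.
  by apply: List.in_or_app; right.
Qed.

Lemma iota_pos (e : R) : 0 < e -> 0 < iota e.
Proof. by move=> e0; rewrite -iota0 iota_lt. Qed.

Lemma FVd0 : FVd (fun _ => 0).
Proof.
split; first by move=> a f g _ _; rewrite mulr0 addr0.
move=> f Ff e e0; exists nil, 1; split => // g _ /=.
by rewrite subrr normr0 iota_pos.
Qed.

Lemma FVd_lin (a : K) (phi psi : (pts -> K) -> K) : FVd phi -> FVd psi ->
  FVd (fun f => a * phi f + psi f).
Proof.
move=> [l1 c1] [l2 c2]; split.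
  move=> a' f g Ff Fg; rewrite l1 // l2 //.
  by rewrite mulrDr mulrA (mulrC a a') -mulrA addrACA mulrDr addrA.
move=> f Ff e e0; have [r [r0 ha]] := norm_iota' a.
have r10 : 0 < r + 1 by rewrite ltr_wpDl.
have e20 : 0 < e / 2 by rewrite divr_gt0.
have e10 : 0 < e / 2 / (r + 1) by rewrite divr_gt0.
apply: (FVn_mono _ _ _ _ (FVn_I _ _ _ (c1 f Ff _ e10) (c2 f Ff _ e20))) => g Fg [/= h1 h2].
rewrite opprD addrACA -mulrBr.
apply: le_lt_trans (ler_normD _ _) _.
rewrite [e]splitr iotaD; apply: ler_ltD => //.
rewrite normrM ha; apply: le_trans (_ : iota r * iota (e / 2 / (r + 1)) <= _).
  by apply: ler_wpM2l; [rewrite -iota0 iota_le | exact: ltW].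
rewrite -iotaM iota_le mulrC -mulrA -mulrA ler_wpM2l ?(ltW e0) // -mulrA ler_piMr //.
by rewrite mulrC ler_pdivrMr // mul1r lerDl.
Qed.

Variable E : tvsType K.
Variable u : ((pts -> K) -> K) -> E.
Hypothesis hu : eps_prod iota W u.

Lemma u0 : u (fun _ => 0) = 0.
Proof.
have := (proj1 hu) 1 _ _ FVd0 FVd0.
have -> : (fun f : pts -> K => 1 * (fun _ => 0 : K) f + (fun _ => 0) f) = (fun _ => 0).
  by apply: funext => f; rewrite mulr0 addr0.
by rewrite scale1r => /eqP; rewrite -subr_eq0 opprD addrA subrr add0r oppr_eq0 => /eqP.
Qed.

Lemma u_diff (a : K) (phi psi : (pts -> K) -> K) : FVd phi -> FVd psi ->
  u (fun f => a * (phi f - psi f)) = a *: (u phi - u psi).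
Proof.
move=> Fphi Fpsi.
have Fn : FVd (fun f => (- a) * psi f + (fun _ => 0) f) by exact: FVd_lin FVd0.
have -> : (fun f => a * (phi f - psi f)) =
   (fun f => a * phi f + (fun f => (- a) * psi f + (fun _ => 0) f) f).
  by apply: funext => f; rewrite mulrBr addr0 mulNr.
rewrite (proj1 hu) // (proj1 hu) //; last exact: FVd0.
transitivity (a *: u phi + (- a *: u psi + 0)); first by congr (_ + (_ + _)); exact: u0.
by rewrite addr0 scaleNr scalerBr.
Qed.

Lemma FVd_diff (a : K) (phi psi : (pts -> K) -> K) : FVd phi -> FVd psi ->
  FVd (fun f => a * (phi f - psi f)).
Proof.
move=> Fphi Fpsi.
have Fn : FVd (fun f => (- a) * psi f + (fun _ => 0) f) by exact: FVd_lin FVd0.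
have -> : (fun f => a * (phi f - psi f)) =
   (fun f => a * phi f + (fun f => (- a) * psi f + (fun _ => 0) f) f).
  by apply: funext => f; rewrite mulrBr addr0 mulNr.
exact: FVd_lin.
Qed.

Definition Dk (f : pts -> K) : set (pts -> K) :=
  [set g | exists c : K, `|c| <= 1 /\ g = (fun z => c * f z)].

Lemma Dk_self f : Dk f f.
Proof. by exists 1; split; [rewrite normr1 | apply: funext => z; rewrite mul1r]. Qed.

Lemma Dk_abs f : abs_convex (Dk f).
Proof.
move=> g h a b [c1 [hc1 ->]] [c2 [hc2 ->]] hab; exists (a * c1 + b * c2); split.
  apply: le_trans (ler_normD _ _) _; apply: le_trans hab.
  by rewrite !normrM; apply: lerD; apply: ler_piMr.
by apply: funext => z; rewrite mulrDl !mulrA.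
Qed.

Lemma bound_list f : FVf f -> forall I : seq (fJ W * fM W),
  exists M, 0 <= M /\ forall i, List.In i I -> sn_le iota i.1 i.2 f M.
Proof.
move=> [_ _ sf]; elim=> [|i0 I [M [M0 HM]]]; first by exists 0; split.
have [s hs] := sf i0.1 i0.2.
exists (Num.max M s); split; first by rewrite le_max M0.
move=> i [<-|iI].
  by apply: sn_le_mono hs; rewrite le_max lexx orbT.
by apply: sn_le_mono (HM i iI); rewrite le_max lexx.
Qed.

Lemma Dk_compact f : FVf f -> FV_compact iota W (Dk f).
Proof.
move=> Ff.
have DF : Dk f `<=` FVf by move=> g [c [_ ->]]; exact: FV_scale.
split => // F PF FD.
pose P g := [set c : K | `|c| <= 1 /\ g = (fun z => c * f z)].
pose coef g := xget 0 (P g).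
have coefP : forall g, Dk f g -> P g (coef g).
  by move=> g [c hc]; apply: xgetPex; exists c.
have G1 : (coef @ F) [set c | `|c| <= 1].
  change (F (coef @^-1` [set c | `|c| <= 1])).
  by apply: (filterS _ FD) => g /coefP [].
have [c0 [c01 Hc]] := diskK _ (fmap_proper_filter coef PF) G1.
exists (fun z => c0 * f z); split; first by exists c0.
move=> B C FB [I [e [e0 hC]]].
have [M [M0 HM]] := @bound_list f Ff I.
have M10 : 0 < M + 1 by rewrite ltr_wpDl.
have e20 : 0 < e / 2 by rewrite divr_gt0.
have eps0 : 0 < e / 2 / (M + 1) by rewrite divr_gt0.
have GS : (coef @ F) [set c | exists g, B g /\ Dk f g /\ coef g = c].
  change (F (coef @^-1` [set c | exists g, B g /\ Dk f g /\ coef g = c])).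
  by apply: (filterS _ (filterI FB FD)) => g [Bg Dg]; exists g.
have [c [[g [Bg [Dg <-]]] hc]] := Hc _ GS _ eps0.
exists g; split => //; apply: hC; split; first exact: DF.
move=> i iI; have [_ gE] := coefP g Dg.
have [r [r0 hr]] := norm_iota' (coef g - c0).
exists (r * M); split.
  move: hc; rewrite hr iota_lt => hr'.
  apply: (le_lt_trans (_ : _ <= e / 2 / (M + 1) * (M + 1))).
    apply: le_trans (_ : _ <= e / 2 / (M + 1) * M) _.
      by apply: ler_wpM2r => //; exact: ltW.
    by apply: ler_wpM2l; [exact: ltW | rewrite lerDl].
  by rewrite divfK ?gt_eqF // ltr_pdivrMr // ltr_pMr // ltr1n.
have -> : dif g (fun z => c0 * f z) = (fun z => (coef g - c0) * f z).
  by rewrite {1}gE; apply: funext => z; rewrite /dif mulrBl.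
exact: (@sn_le_scale _ _ _ _ _ _ Ff hr (HM i iI)).
Qed.

Lemma u_ext (phi psi : (pts -> K) -> K) : hausdorff_space E -> FVd phi -> FVd psi ->
  (forall f, FVf f -> phi f = psi f) -> u phi = u psi.
Proof.
move=> hE Fp Fq eqf; apply: hE => A B hA hB.
have [V [[A0 [e [_ [A0FV _] e0 sub]]] HV]] := (proj2 hu) phi Fp A hA.
exists (u psi); split; last exact: nbhs_singleton hB.
apply: HV Fq _; apply: sub => f A0f.
by rewrite -eqf ?subrr ?normr0 ?iota_pos //; exact: A0FV.
Qed.

Hypothesis hE : hausdorff_space E.
Hypothesis hC1 : C1_dual iota W (@delta R K d Om).

Theorem main_res : C1 iota (Smap u) /\
  (forall (x : pts) (n : 'I_d), partial_lim iota (Smap u) x n (u (fun f => pdK iota f n x))).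
Proof.
have [Fdel [dg [Fdg conv1 conv2]]] := hC1.
have dqE : forall x n h, dquot iota (Smap u) x n h = u (dquot_dual iota (@delta R K d Om) x n h).
  move=> x n h; rewrite /dquot /dquot_dual /extf /extD /Smap.
  case: insub => [z|] /=.
    by rewrite (u_diff _ _ _ (Fdel z) (Fdel x)).
  rewrite (u_diff _ _ _ FVd0 (Fdel x)); congr (_ *: (_ - _)); symmetry; exact: u0.
have Fdq : forall x n h, FVd (dquot_dual iota (@delta R K d Om) x n h).
  move=> x n h; rewrite /dquot_dual /extD.
  case: insub => [z|] /=; first exact: FVd_diff.
  exact: (FVd_diff _ _ _ FVd0 (Fdel x)).
have hpl : forall x n, partial_lim iota (Smap u) x n (u (dg n x)).
  move=> x n U hU.
  have [V [kV HV]] := (proj2 hu) _ (Fdg n x) U hU.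
  have := conv1 n x V kV; rewrite !nbhs_simpl /=; apply: filterS => h Vh /=.
  rewrite dqE; exact: HV (Fdq x n h) Vh.
have agree : forall n x f, FVf f -> dg n x f = pdK iota f n x.
  move=> n x f Ff; rewrite /pdK; symmetry; apply: cvg_lim; first exact: norm_hausdorff.
  apply/cvgrPdist_lt => eps eps0.
  have [r [r0 ->]] := pos_iota _ eps0.
  pose V := [set psi : (pts -> K) -> K | forall g, Dk f g -> `|psi g - dg n x g| < iota r].
  have kV : kappa_nbhs iota W (dg n x) V.
    by exists (Dk f), r; split => //; [exact: Dk_abs | exact: Dk_compact].
  have := conv1 n x V kV; rewrite !nbhs_simpl /=; apply: filterS => h Vh /=.
  have := Vh f (Dk_self f); rewrite distrC.
  by rewrite /dquot_dual /dquot /extD /extf; case: insub.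
have Fpd : forall n x, FVd (fun f => pdK iota f n x).
  move=> n x; split.
    move=> a f g Ff Fg; rewrite -!agree //; last exact: FV_lin.
    exact: (proj1 (Fdg n x)).
  move=> f Ff e e0; apply: (FVn_mono _ _ _ _ (proj2 (Fdg n x) f Ff e e0)) => g Fg /=.
  by rewrite -!agree.
split.
  exists (fun n x => u (dg n x)); split; first by move=> n x; exact: hpl.
  move=> n; apply/(@subspace_continuousP _ Om E) => y Omy.
  pose p : pts := exist _ y (mem_set Omy).
  have ey : extf (fun x => u (dg n x)) y = u (dg n p).
    by rewrite /extf (_ : y = val p) // valK.
  rewrite /from_subspace ey => U hU.
  have [V [kV HV]] := (proj2 hu) _ (Fdg n p) U hU.
  have := conv2 n p V kV; rewrite !nbhs_simpl /= => H.
  apply: (@filterS2 _ _ _ _ _ _ _ H (withinT Om _)) => y' Vy' Omy'.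
  move: Vy'; rewrite /extD /extf /preimage /=; case: (@insubP _ _ pts y') => [z _ _|/negP hn].
    exact: HV (Fdg n z).
  by exfalso; apply: hn; exact: mem_set.
move=> x n.
have -> : u (fun f => pdK iota f n x) = u (dg n x).
  symmetry; apply: (u_ext _ _ hE (Fdg n x) (Fpd n x)) => f Ff; exact: agree.
exact: hpl.
Qed.
End Main.

Theorem proposition4p10 (R : realType) (b : bool) (d : nat) (Om : set 'rV[R]_d)
  (E : tvsType (Kfld R b)) (W : framework (Kfld R b) Om) :
  open Om ->
  hausdorff_space E -> (exists y : E, y != 0) ->
  framework_ok W ->
  dom_space (Kemb R b) W ->
  (forall f, FV (Kemb R b) W f -> @C1 R (Kfld R b) (Kemb R b) d Om (Kfld R b)^o f) ->
  C1_dual (Kemb R b) W (@delta R (Kfld R b) d Om) ->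
  forall u : ((pts Om -> Kfld R b) -> Kfld R b) -> E,
    eps_prod (Kemb R b) W u ->
    C1 (Kemb R b) (Smap u) /\
    (forall (x : pts Om) (n : 'I_d),
       partial_lim (Kemb R b) (Smap u) x n (u (fun f => pdK (Kemb R b) f n x))).
Proof.
move=> _ hE _ Wok _ _ hC1 u hu.
apply: main_res => //.
- exact: KiotaD.
- exact: KiotaM.
- exact: Kiota_le.
- exact: Kiota_lt.
- exact: Kiota0.
- exact: Knorm_iota.
- exact: KdiskK.
- exact: Wok.
- exact: hu.
- exact: hC1.
Qed.
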